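(* Let $F$ be a field of characteristic zero and $r$ a positive integer. Let $\mathfrak{L}$ be an $(r+1)$-dimensional solvable, non-nilpotent (left) Leibniz algebra over $F$ whose nilradical is the $r$-dimensional abelian algebra $A(r)$. Choose a basis $\{n_1,\dots,n_r,x\}$ of $\mathfrak{L}$ with $n_1,\dots,n_r$ a basis of $A(r)$ and $x\in\mathfrak{L}\setminus A(r)$. Then $[n_i,n_j]=0$ for all $i,j$, and there are matrices $L,R\in F^{r\times r}$ and a vector $\sigma=(\sigma_1,\dots,\sigma_r)^T\in F^r$ such that $$[x,n_i]=\sum_j L_{ij}n_j,\qquad [n_i,x]=\sum_jR_{ij}n_j,\qquad [x,x]=\sum_j\sigma_jn_j,$$ and $\sigma$ lies in the null space of $R^T$ (i.e. $R^T\sigma=0$).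
   Context: A (left) Leibniz algebra is a vector space with bilinear product satisfying $[x,[y,z]]=[[x,y],z]+[y,[x,z]]$. Solvable: derived series $\mathfrak{L}^{(1)}=[\mathfrak{L},\mathfrak{L}]$, $\mathfrak{L}^{(n+1)}=[\mathfrak{L}^{(n)},\mathfrak{L}^{(n)}]$ eventually zero. Nilpotent: lower central series $\mathfrak{L}^2=[\mathfrak{L},\mathfrak{L}]$, $\mathfrak{L}^{k+1}=[\mathfrak{L},\mathfrak{L}^k]$ eventually zero. Nilradical: the unique maximal nilpotent ideal. $A(r)$ is the $r$-dimensional algebra with all products zero. *)

(* Defs.v *)
From HB Require Import structures.
From mathcomp Require Import all_boot all_order all_algebra.
Set Implicit Arguments. Unset Strict Implicit. Unset Printing Implicit Defensive.
Import GRing.Theory.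
Local Open Scope ring_scope.

Section Leibniz.
Variables (F : fieldType) (V : vectType F) (br : V -> V -> V).

Definition bilinear_br : Prop :=
  (forall (a : F) (u v w : V), br (a *: u + v) w = a *: br u w + br v w) /\
  (forall (a : F) (u v w : V), br w (a *: u + v) = a *: br w u + br w v).

Definition left_leibniz : Prop :=
  forall x y z : V, br x (br y z) = br (br x y) z + br y (br x z).

Definition brsp (A B : {vspace V}) : {vspace V} :=
  <<[seq br u v | u <- vbasis A, v <- vbasis B]>>%VS.

Definition is_ideal (I : {vspace V}) : Prop :=
  (brsp fullv I <= I)%VS /\ (brsp I fullv <= I)%VS.

Fixpoint derived (I : {vspace V}) (k : nat) : {vspace V} :=
  if k is k'.+1 then brsp (derived I k') (derived I k') else I.

Fixpoint lcs (I : {vspace V}) (k : nat) : {vspace V} :=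
  if k is k'.+1 then brsp I (lcs I k') else I.

Definition solvable_alg (I : {vspace V}) : Prop :=
  exists k, derived I k = 0%VS.

Definition nilpotent_alg (I : {vspace V}) : Prop :=
  exists k, lcs I k = 0%VS.

Definition is_nilradical (N : {vspace V}) : Prop :=
  [/\ is_ideal N, nilpotent_alg N &
      forall I : {vspace V}, is_ideal I -> nilpotent_alg I -> (I <= N)%VS].

(* N is isomorphic to the abelian algebra A(r) *)
Definition is_abelian_of_dim (N : {vspace V}) (r : nat) : Prop :=
  \dim N = r /\ brsp N N = 0%VS.

End Leibniz.

(* Main.v *)
Require Import Defs.
From HB Require Import structures.
From mathcomp Require Import all_boot all_order all_algebra.
Import GRing.Theory.
Local Open Scope ring_scope.

Set Implicit Arguments.
Section Aux.
Variables (F : fieldType) (V : vectType F) (br : V -> V -> V).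
Hypothesis Hb : bilinear_br br.

Lemma br0l w : br 0 w = 0.
Proof.
case: Hb => H _; have := H 1 0 0 w; rewrite !scale1r addr0 => E.
by apply: (addIr (br 0 w)); rewrite add0r -E.
Qed.
Lemma br0r w : br w 0 = 0.
Proof.
case: Hb => _ H; have := H 1 0 0 w; rewrite !scale1r addr0 => E.
by apply: (addIr (br w 0)); rewrite add0r -E.
Qed.
Lemma brZl a u w : br (a *: u) w = a *: br u w.
Proof. by case: Hb => H _; have := H a u 0 w; rewrite addr0 br0l addr0. Qed.
Lemma brDl u v w : br (u + v) w = br u w + br v w.
Proof. by case: Hb => H _; have := H 1 u v w; rewrite !scale1r. Qed.
Lemma brZr a u w : br w (a *: u) = a *: br w u.
Proof. by case: Hb => _ H; have := H a u 0 w; rewrite addr0 br0r addr0. Qed.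
Lemma brDr u v w : br w (u + v) = br w u + br w v.
Proof. by case: Hb => _ H; have := H 1 u v w; rewrite !scale1r. Qed.
Lemma brNl u w : br (- u) w = - br u w.
Proof. by rewrite -scaleN1r brZl scaleN1r. Qed.
Lemma brsuml (I : Type) (s : seq I) (f : I -> V) w :
  br (\sum_(i <- s) f i) w = \sum_(i <- s) br (f i) w.
Proof.
elim: s => [|a s IH]; first by rewrite !big_nil br0l.
by rewrite !big_cons brDl IH.
Qed.
Lemma brsumr (I : Type) (s : seq I) (f : I -> V) w :
  br w (\sum_(i <- s) f i) = \sum_(i <- s) br w (f i).
Proof.
elim: s => [|a s IH]; first by rewrite !big_nil br0r.
by rewrite !big_cons brDr IH.
Qed.

Lemma mem_brsp (A B : {vspace V}) u v :
  u \in A -> v \in B -> br u v \in brsp br A B.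
Proof.
move=> uA vB; rewrite (coord_vbasis uA) (coord_vbasis vB) brsuml.
apply: memv_suml => i _; rewrite brZl; apply: memvZ.
rewrite brsumr; apply: memv_suml => j _; rewrite brZr; apply: memvZ.
apply: memv_span; apply: allpairs_f; apply: mem_nth; by rewrite size_tuple.
Qed.

Lemma brsp_sub (A B S : {vspace V}) :
  (forall u v, u \in A -> v \in B -> br u v \in S) -> (brsp br A B <= S)%VS.
Proof.
move=> H; apply/span_subvP => z /allpairsP [[a b] [/= Ha Hb' ->]].
by apply: H; apply: vbasis_mem.
Qed.
End Aux.

Theorem theorem4p3 (F : fieldType) (V : vectType F) (br : V -> V -> V)
    (r : nat) (N : {vspace V}) (n : 'I_r -> V) (x : V) :
  [pchar F] =i pred0 ->
  (0 < r)%N ->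
  bilinear_br br -> left_leibniz br ->
  \dim (fullv : {vspace V}) = r.+1 ->
  solvable_alg br fullv -> ~ nilpotent_alg br fullv ->
  is_nilradical br N -> is_abelian_of_dim br N r ->
  basis_of N [seq n i | i <- enum 'I_r] ->
  x \notin N ->
  (forall i j : 'I_r, br (n i) (n j) = 0) /\
  exists (Lm Rm : 'M[F]_r) (sigma : 'cV[F]_r),
    [/\ forall i : 'I_r, br x (n i) = \sum_(j < r) Lm i j *: n j,
        forall i : 'I_r, br (n i) x = \sum_(j < r) Rm i j *: n j,
        br x x = \sum_(j < r) sigma j 0 *: n j
      & Rm^T *m sigma = 0].
Proof.
move=> _ _ Hb Hl Hdim _ Hnil [[Hid1 Hid2] _ _] [HdN HNN] Hbas xN.
have Nab : forall m m', m \in N -> m' \in N -> br m m' = 0.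
  by move=> m m' Hm Hm'; apply/eqP; rewrite -memv0 -HNN mem_brsp.
have NidL : forall u m, m \in N -> br u m \in N.
  by move=> u m Hm; apply: (subvP Hid1); apply: mem_brsp; rewrite ?memvf.
have NidR : forall u m, m \in N -> br m u \in N.
  by move=> u m Hm; apply: (subvP Hid2); apply: mem_brsp; rewrite ?memvf.
split.
  move=> i j; apply: Nab; apply: (basis_mem Hbas); apply: map_f; exact: mem_enum.
have x0 : x != 0 by apply: contraNneq xN => ->; rewrite mem0v.
have Hfull : (N + <[x]>)%VS = fullv.
  apply/eqP; rewrite eqEdim subvf /= Hdim dimv_disjoint_sum ?dim_vline ?x0 ?HdN ?addn1 //.
  apply/eqP; rewrite -subv0; apply/subvP => z /memv_capP [zN /vlineP [k Ek]].
  rewrite memv0; move: zN; rewrite Ek; have [->|k0] := eqVneq k 0.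
    by rewrite scale0r.
  by move=> H; exfalso; move/negP: xN; apply; rewrite -(scalerK k0 x) memvZ.
have Hdec : forall u, exists c, exists2 m, m \in N & u = c *: x + m.
  move=> u; have : u \in (N + <[x]>)%VS by rewrite Hfull memvf.
  case/memv_addP => m Hm [y /vlineP [c ->] ->]; exists c, m => //.
  by rewrite addrC.
have Hw : forall y, br (br x x) y = 0.
  move=> y; apply: (addIr (br x (br x y))); by rewrite add0r -Hl.
have wN : br x x \in N.
  have [c [m Hm Ew]] := Hdec (br x x).
  have [c00|c0] := eqVneq c 0; first by rewrite Ew c00 scale0r add0r.
  exfalso; apply: Hnil; exists 2%N => /=.
  have key : forall v, br x v = - c^-1 *: br m v.
    move=> v; have := Hw v.
    rewrite Ew (brDl Hb) (brZl Hb) => /eqP; rewrite addr_eq0 => /eqP E.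
    by rewrite scaleNr -scalerN -E scalerA mulVf // scale1r.
  have S1 : (brsp br fullv fullv <= N)%VS.
    apply: (brsp_sub br) => u v _ _; have [c' [m' Hm' ->]] := Hdec u.
    by rewrite (brDl Hb) (brZl Hb) key memvD ?memvZ ?memvN ?NidR.
  apply/eqP; rewrite -subv0; apply: (brsp_sub br) => u v _ Hv.
  have vN := subvP S1 _ Hv.
  have [c' [m' Hm' ->]] := Hdec u.
  by rewrite (brDl Hb) (brZl Hb) key (Nab m) // (Nab m') // scaler0 scaler0 addr0 mem0v.
pose T := [tuple n i | i < r].
have spT : <<T>>%VS = N by case/andP: Hbas => /eqP.
have frT : free T by case/andP: Hbas.
have Tn : forall i : 'I_r, T`_i = n i by move=> i; rewrite nth_mktuple.
have rep : forall v, v \in N -> v = \sum_(j < r) coord T j v *: n j.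
  move=> v; rewrite -spT => /coord_span {1}->; apply: eq_bigr => j _; by rewrite Tn.
have nN : forall i, n i \in N.
  by move=> i; apply: (basis_mem Hbas); apply: map_f; exact: mem_enum.
exists (\matrix_(i, j) coord T j (br x (n i))),
       (\matrix_(i, j) coord T j (br (n i) x)),
       (\col_j coord T j (br x x)).
split.
- by move=> i; under eq_bigr do rewrite mxE; apply: rep; apply: NidL.
- by move=> i; under eq_bigr do rewrite mxE; apply: rep; apply: NidR.
- by under eq_bigr do rewrite mxE; apply: rep.
apply/matrixP => j k; rewrite ord1 !mxE.
under eq_bigr do rewrite !mxE.
move/freeP: frT => HF.
apply: (HF (fun j => \sum_(i < r) coord T j (br (n i) x) * coord T i (br x x))) => {j}.
transitivity (br (br x x) x); last exact: Hw x.
rewrite {2}(rep _ wN) (brsuml Hb).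
under [RHS]eq_bigr do rewrite (brZl Hb) (rep _ (NidR x _ (nN _))) scaler_sumr.
rewrite exchange_big /=; apply: eq_bigr => j _; rewrite Tn scaler_suml.
by apply: eq_bigr => i _; rewrite scalerA mulrC.
Qed.
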